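(* If $x\in(-1,1)$ is irrational then for each $r\in\{0,1\}$ and each $y\in\overline{\mathbb{R}}$ with $|y|\in[\pi/2,+\infty]$ there exists a sequence $n_j$ such that $n_j\equiv r \pmod 2$ for all $j$ and $\lim_{j\to\infty}D_{n_j}(x)/n_j=y$.
   Context: Nodes: $x_{k,n}:=2k/n-1$, $k=0,\dots,n$; $D_n(x)=\sum_{k=0}^n(-1)^k\frac{1}{x-x_{k,n}}$. $\overline{\mathbb{R}}=\mathbb{R}\cup\{\pm\infty\}$ is the two-point compactification of $\mathbb{R}$. A sequence $n_j$ is a strictly increasing map $\mathbb{N}\to\mathbb{N}$. *)

(* Defs.v *)
From Stdlib Require Import Reals QArith.
From Coquelicot Require Import Coquelicot.
Open Scope R_scope.

Definition node (k n : nat) : R := 2 * INR k / INR n - 1.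

(* D_n(x) = sum_{k=0}^n (-1)^k / (x - x_{k,n}) ; sum_f_R0 f n has n+1 terms *)
Definition Dn (n : nat) (x : R) : R :=
  sum_f_R0 (fun k => (-1) ^ k / (x - node k n)) n.

Definition irrational (x : R) : Prop := forall q : Q, x <> Q2R q.

Definition abs_ge_pi2 (y : Rbar) : Prop :=
  match y with
  | Finite r => PI / 2 <= Rabs r
  | p_infty => True
  | m_infty => True
  end.

(* Main.v *)
Require Import Defs.
From Stdlib Require Import Reals QArith ZArith Lia Lra Ranalysis5 Classical IndefiniteDescription.
From Coquelicot Require Import Coquelicot.
Open Scope R_scope.

Definition A (K : nat) (t : R) : R := sum_f_R0 (fun i => (-1) ^ i / (t + INR i)) K.

Lemma neg_sum (f : nat -> R) N : sum_f_R0 (fun i => - f i) N = - sum_f_R0 f N.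
Proof. induction N; simpl; [ring| rewrite IHN; ring]. Qed.

Lemma alt_bound : forall K (b : nat -> R), (forall i, 0 <= b i) -> (forall i, b (S i) <= b i) ->
  0 <= sum_f_R0 (fun i => (-1) ^ i * b i) K <= b 0%nat.
Proof.
  induction K; intros b H0 H1.
  - simpl. specialize (H0 0%nat). lra.
  - rewrite decomp_sum by lia. simpl Nat.pred.
    assert (E : sum_f_R0 (fun i => (-1) ^ S i * b (S i)) K = - sum_f_R0 (fun i => (-1) ^ i * b (S i)) K).
    { rewrite <- neg_sum. apply sum_eq. intros. simpl. ring. }
    rewrite E. destruct (IHK (fun i => b (S i))) as [h1 h2]; auto.
    simpl. specialize (H1 0%nat). lra.
Qed.

Lemma A_nonneg K t : 0 < t -> 0 <= A K t.
Proof.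
  intros Ht. unfold A.
  destruct (alt_bound K (fun i => / (t + INR i))) as [h _].
  - intros i. left. apply Rinv_0_lt_compat. pose proof (pos_INR i). lra.
  - intros i. apply Rinv_le_contravar. pose proof (pos_INR i). lra. rewrite S_INR. lra.
  - eapply Rle_trans. apply h. right. apply sum_eq. intros. unfold Rdiv. ring.
Qed.

Lemma A_lower K t : 0 < t -> / t - 1 <= A K t.
Proof.
  intros Ht. unfold A. destruct K.
  - simpl. replace (1 / (t + 0)) with (/ t) by (field; lra). lra.
  - rewrite decomp_sum by lia. simpl Nat.pred.
    destruct (alt_bound K (fun i => / (t + INR (S i)))) as [_ h].
    + intros i. left. apply Rinv_0_lt_compat. pose proof (pos_INR (S i)). lra.
    + intros i. apply Rinv_le_contravar. pose proof (pos_INR (S i)). lra. rewrite (S_INR (S i)). lra.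
    + assert (E : sum_f_R0 (fun i => (-1) ^ S i / (t + INR (S i))) K = - sum_f_R0 (fun i => (-1) ^ i * / (t + INR (S i))) K).
      { rewrite <- neg_sum. apply sum_eq. intros. simpl. unfold Rdiv. ring. }
      rewrite E. change (INR 1) with 1 in h.
      assert (/ (t + 1) <= 1). { rewrite <- Rinv_1. apply Rinv_le_contravar; lra. }
      simpl pow. change (INR 0) with 0. replace (1 / (t + 0)) with (/ t) by (field; lra). lra.
Qed.

Lemma A_tail t K K' : 0 < t -> (K <= K')%nat -> Rabs (A K' t - A K t) <= / (INR K + 1).
Proof.
  intros Ht HK. assert (HK1 : 0 < INR K + 1) by (pose proof (pos_INR K); lra).
  destruct (Nat.eq_dec K K') as [<-|Hne].
  { rewrite Rminus_diag, Rabs_R0. left. apply Rinv_0_lt_compat. lra. }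
  unfold A. rewrite (tech2 _ K K') by lia.
  replace (sum_f_R0 (fun i => (-1) ^ i / (t + INR i)) K +
   sum_f_R0 (fun i => (-1) ^ (S K + i) / (t + INR (S K + i))) (K' - S K) -
   sum_f_R0 (fun i => (-1) ^ i / (t + INR i)) K) with
   (sum_f_R0 (fun i => (-1) ^ (S K + i) / (t + INR (S K + i))) (K' - S K)) by ring.
  rewrite (sum_eq _ (fun i => ((-1) ^ i * / (t + INR (S K + i))) * (-1) ^ (S K))).
  2:{ intros. rewrite pow_add. unfold Rdiv. ring. }
  rewrite <- scal_sum. rewrite Rabs_mult, pow_1_abs, Rmult_1_l.
  destruct (alt_bound (K' - S K) (fun i => / (t + INR (S K + i)))) as [h1 h2].
  + intros i. left. apply Rinv_0_lt_compat. pose proof (pos_INR (S K + i)). lra.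
  + intros i. apply Rinv_le_contravar. pose proof (pos_INR (S K + i)). lra.
    rewrite <- plus_n_Sm, (S_INR (S K + i)). lra.
  + rewrite Rabs_pos_eq by lra. eapply Rle_trans. apply h2.
    apply Rinv_le_contravar. lra. rewrite Nat.add_0_r, S_INR. lra.
Qed.

Lemma reverse_sum : forall m (g : nat -> R), sum_f_R0 g m = sum_f_R0 (fun i => g (m - i)%nat) m.
Proof.
  induction m; intros g.
  - simpl. reflexivity.
  - rewrite decomp_sum by lia. simpl Nat.pred. rewrite IHm.
    rewrite tech5. rewrite Nat.sub_diag.
    rewrite (sum_eq (fun i => g (S (m - i))) (fun i => g (S m - i)%nat)).
    + ring.
    + intros i Hi. f_equal. lia.
Qed.

Lemma decomp (n m : nat) (t : R) : (m < n)%nat -> 0 < t < 1 ->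
  sum_f_R0 (fun k => (-1) ^ k / (INR m + t - INR k)) n = (-1) ^ m * (A m t + A (n - S m) (1 - t)).
Proof.
  intros Hmn Ht. rewrite (tech2 _ m n Hmn). rewrite Rmult_plus_distr_l. f_equal.
  - rewrite reverse_sum. unfold A. rewrite scal_sum. apply sum_eq. intros i Hi.
    rewrite minus_INR by lia.
    assert (E : (-1) ^ (m - i) = (-1) ^ m * (-1) ^ i).
    { replace m with ((m - i) + i)%nat at 2 by lia. rewrite pow_add.
      rewrite Rmult_assoc, <- pow_add. replace (i + i)%nat with (2 * i)%nat by lia.
      rewrite pow_mult. replace ((-1)^2) with 1 by ring. rewrite pow1. ring. }
    rewrite E. pose proof (pos_INR i). field. lra.
  - unfold A. rewrite scal_sum. apply sum_eq. intros i Hi.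
    rewrite pow_add. rewrite plus_INR, S_INR. simpl pow. pose proof (pos_INR i). field. lra.
Qed.

Lemma Dn_decomp (n m : nat) (t x : R) : (m < n)%nat -> 0 < t < 1 ->
  x = 2 * (INR m + t) / INR n - 1 ->
  Dn n x / INR n = / 2 * ((-1) ^ m * (A m t + A (n - S m) (1 - t))).
Proof.
  intros Hmn Ht Hx. rewrite <- decomp by auto.
  assert (Hn : 0 < INR n) by (apply lt_0_INR; lia).
  unfold Dn. unfold Rdiv at 1. rewrite Rmult_comm, scal_sum, scal_sum.
  apply sum_eq. intros k Hk. unfold node. rewrite Hx.
  assert (INR m + t - INR k <> 0).
  { destruct (Compare_dec.le_lt_dec k m) as [h|h].
    - apply le_INR in h. lra.
    - assert (h2 : (S m <= k)%nat) by lia. apply le_INR in h2. rewrite S_INR in h2. lra. }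
  replace (2 * (INR m + t) / INR n - 1 - (2 * INR k / INR n - 1)) with (2 * (INR m + t - INR k) / INR n) by (field; lra).
  field. split; lra.
Qed.

Lemma php : forall M (f : nat -> nat), (forall i, (i <= M)%nat -> (f i < M)%nat) ->
  exists i j, (i < j <= M)%nat /\ f i = f j.
Proof.
  induction M; intros f Hf.
  - specialize (Hf 0%nat (le_n 0)). lia.
  - set (v := f (S M)).
    destruct (Classical_Prop.classic (exists i, (i <= M)%nat /\ f i = v)) as [[i [Hi Hv]]|Hno].
    + exists i, (S M). split; [lia|]. exact Hv.
    + set (g := fun i => if Nat.ltb (f i) v then f i else (f i - 1)%nat).
      assert (Hv : (v < S M)%nat) by (apply Hf; lia).
      destruct (IHM g) as [i [j [Hij Hg]]].
      * intros i Hi. assert (f i <> v) by (intro; apply Hno; exists i; auto).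
        specialize (Hf i ltac:(lia)). unfold g. destruct (Nat.ltb_spec (f i) v); lia.
      * exists i, j. split; [lia|].
        assert (f i <> v) by (intro; apply Hno; exists i; split; auto; lia).
        assert (f j <> v) by (intro; apply Hno; exists j; split; auto; lia).
        unfold g in Hg. destruct (Nat.ltb_spec (f i) v); destruct (Nat.ltb_spec (f j) v); lia.
Qed.

Lemma floor_spec x : IZR (floor x) <= x < IZR (floor x) + 1.
Proof. unfold floor. destruct (floor_ex x). simpl. exact a. Qed.

Definition irr_alpha (al : R) := forall (q : nat) (P : Z), (1 <= q)%nat -> INR q * al <> IZR P.

Lemma INR_Z2Nat z : (0 <= z)%Z -> INR (Z.to_nat z) = IZR z.
Proof. intros. rewrite INR_IZR_INZ. f_equal. lia. Qed.

Lemma dirichlet al d : irr_alpha al -> 0 < d ->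
  exists q P, (1 <= q)%nat /\ 0 < Rabs (INR q * al - IZR P) < d.
Proof.
  intros Hirr Hd. destruct (archimed_cor1 d Hd) as [M [HM HM0]].
  assert (HMp : 0 < INR M) by (apply lt_0_INR; lia).
  set (fr := fun i : nat => INR i * al - IZR (floor (INR i * al))).
  assert (Hfr : forall i, 0 <= fr i < 1).
  { intros i. unfold fr. pose proof (floor_spec (INR i * al)). lra. }
  set (F := fun i => floor (INR M * fr i)).
  assert (HF : forall i, (0 <= F i)%Z /\ (F i < Z.of_nat M)%Z).
  { intros i. unfold F. pose proof (floor_spec (INR M * fr i)). specialize (Hfr i).
    assert (0 <= INR M * fr i < INR M) by nra. split.
    - assert (-1 < IZR (floor (INR M * fr i))) by lra. apply lt_IZR in H1. lia.
    - assert (IZR (floor (INR M * fr i)) < IZR (Z.of_nat M)) by (rewrite <- INR_IZR_INZ; lra).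
      apply lt_IZR in H1. exact H1. }
  destruct (php M (fun i => Z.to_nat (F i))) as [i [j [Hij Heq]]].
  { intros i _. destruct (HF i). lia. }
  assert (HFe : F i = F j) by (destruct (HF i); destruct (HF j); lia).
  exists (j - i)%nat, (floor (INR j * al) - floor (INR i * al))%Z. split; [lia|].
  assert (E : INR (j - i) * al - IZR (floor (INR j * al) - floor (INR i * al)) = fr j - fr i).
  { unfold fr. rewrite minus_INR by lia. rewrite minus_IZR. ring. }
  rewrite E. split.
  - apply Rabs_pos_lt. rewrite <- E. apply Rminus_eq_contra. apply Hirr. lia.
  - pose proof (floor_spec (INR M * fr i)). pose proof (floor_spec (INR M * fr j)).
    fold (F i) in H. fold (F j) in H0. rewrite HFe in H.
    assert (Rabs (INR M * fr j - INR M * fr i) < 1) by (apply Rabs_def1; lra).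
    rewrite <- Rmult_minus_distr_l, Rabs_mult, Rabs_pos_eq in H1 by lra.
    apply Rlt_trans with (/ INR M); auto.
    apply Rmult_lt_reg_l with (INR M); auto. field_simplify; lra.
Qed.

Lemma kstep th L : 0 < th -> 0 <= L -> exists k : nat, L < INR k * th <= L + th.
Proof.
  intros Hth HL. pose proof (floor_spec (L / th)).
  assert (0 <= L / th) by (apply Rdiv_le_0_compat; lra).
  assert (h0 : (0 <= floor (L / th))%Z).
  { assert (-1 < IZR (floor (L / th))) by lra. apply lt_IZR in H1. lia. }
  exists (Z.to_nat (floor (L / th)) + 1)%nat.
  rewrite plus_INR, INR_Z2Nat by auto. change (INR 1) with 1.
  assert (E : L = L / th * th) by (field; lra).
  split; [rewrite E at 1|rewrite E at 2]; nra.
Qed.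

Lemma dens al g a d N : irr_alpha al -> 0 <= a -> 0 < d -> a + d <= 1 ->
  exists q P, (N <= q)%nat /\ a < INR q * al + g - IZR P < a + d.
Proof.
  intros Hirr Ha Hd Had.
  destruct (dirichlet al d Hirr Hd) as [q0 [P0 [Hq0 [Hth1 Hth2]]]].
  set (w := INR N * al + g). set (F := floor w). pose proof (floor_spec w) as Hw. fold F in Hw.
  set (c := w - IZR F).
  destruct (Rle_lt_dec 0 (INR q0 * al - IZR P0)) as [Hs|Hs].
  - rewrite Rabs_pos_eq in Hth1, Hth2 by lra. set (th := INR q0 * al - IZR P0) in *.
    destruct (kstep th (1 + a - c) Hth1) as [k Hk]. { unfold c. lra. }
    exists (N + k * q0)%nat, (F + Z.of_nat k * P0 + 1)%Z. split; [lia|].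
    assert (E : INR (N + k * q0) * al + g - IZR (F + Z.of_nat k * P0 + 1) = c + INR k * th - 1).
    { unfold c, th, w. rewrite plus_INR, mult_INR, !plus_IZR, mult_IZR, <- INR_IZR_INZ. ring. }
    rewrite E. lra.
  - rewrite Rabs_left in Hth1, Hth2 by lra. set (th := - (INR q0 * al - IZR P0)) in *.
    destruct (kstep th (c - a + 1 - d) Hth1) as [k Hk]. { unfold c. lra. }
    exists (N + k * q0)%nat, (F + Z.of_nat k * P0 - 1)%Z. split; [lia|].
    assert (E : INR (N + k * q0) * al + g - IZR (F + Z.of_nat k * P0 - 1) = c - INR k * th + 1).
    { unfold c, th, w. rewrite plus_INR, mult_INR, minus_IZR, !plus_IZR, mult_IZR, <- INR_IZR_INZ. ring. }
    rewrite E. lra.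
Qed.

Lemma mod2 q r : (r = 0 \/ r = 1)%nat -> Nat.modulo (2*q + r) 2 = r.
Proof. intros H. rewrite Nat.add_comm, Nat.mul_comm, Nat.Div0.mod_add. destruct H; subst; reflexivity. Qed.

Lemma nat_big B : exists N : nat, B < INR N.
Proof.
  destruct (archimed B) as [H1 _]. exists (Z.to_nat (up B)).
  destruct (ZArith_dec.Z_le_gt_dec 0 (up B)) as [h|h].
  - rewrite INR_Z2Nat by auto. exact H1.
  - replace (Z.to_nat (up B)) with 0%nat by lia. apply Z.gt_lt in h. apply IZR_lt in h. simpl. lra.
Qed.

Lemma irr_to_alpha x : irrational x -> irr_alpha ((x + 1) / 2).
Proof.
  intros Hirr q P Hq E. destruct q as [|q']; [lia|].
  apply (Hirr (Qmake (2 * P - Z.of_nat (S q')) (Pos.of_succ_nat q'))).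
  unfold Q2R. cbn [Qnum Qden]. rewrite Zpos_P_of_succ_nat, <- Nat2Z.inj_succ.
  rewrite minus_IZR, mult_IZR, <- INR_IZR_INZ, <- E.
  assert (0 < INR (S q')) by (apply lt_0_INR; lia). field. lra.
Qed.

Lemma window x r p t0 d K0 N : -1 < x < 1 -> irrational x -> (r = 0 \/ r = 1)%nat ->
  (p <= 1)%nat -> 0 < t0 -> 0 < d -> t0 + d < 1 ->
  exists n m t, (N < n)%nat /\ Nat.modulo n 2 = r /\ (m < n)%nat /\ (K0 <= m)%nat /\
    (K0 <= n - S m)%nat /\ t0 < t < t0 + d /\
    Dn n x / INR n = / 2 * ((-1) ^ p * (A m t + A (n - S m) (1 - t))).
Proof.
  intros Hx Hirr Hr Hp Ht0 Hd Htd.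
  set (al := (x + 1) / 2).
  assert (Hal : 0 < al < 1) by (unfold al; lra).
  destruct (nat_big ((INR K0 + 1) * (/ al + / (1 - al)))) as [N1 HN1].
  assert (Hpr : INR p <= 1) by (apply le_INR in Hp; exact Hp).
  destruct (dens al (INR r * al / 2) ((INR p + t0) / 2) (d / 2) (N + N1 + 1) (irr_to_alpha x Hirr))
    as [q [P [Hq HP]]].
  { pose proof (pos_INR p). lra. } { lra. } { lra. }
  set (n := (2 * q + r)%nat).
  assert (Hn : INR n = 2 * INR q + INR r) by (unfold n; rewrite plus_INR, mult_INR; reflexivity).
  set (u := INR n * al).
  set (mz := (2 * P + Z.of_nat p)%Z).
  set (t := u - IZR mz).
  assert (Ht : t0 < t < t0 + d).
  { unfold t, u, mz. rewrite plus_IZR, mult_IZR, <- INR_IZR_INZ, Hn. lra. }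
  assert (HqN : INR (N + N1 + 1) <= INR q) by (apply le_INR; lia).
  rewrite !plus_INR in HqN. pose proof (pos_INR N). pose proof (pos_INR N1). pose proof (pos_INR r).
  change (INR 1) with 1 in HqN. assert (HnN1 : INR N1 <= INR n) by lra.
  assert (Hn1 : 1 <= INR n) by lra.
  assert (Hmz0 : (0 <= mz)%Z).
  { assert (-1 < IZR mz). { unfold t in Ht. assert (0 < u) by (unfold u; nra). lra. }
    apply lt_IZR in H2. lia. }
  assert (HP0 : (0 <= P)%Z) by (unfold mz in Hmz0; lia).
  set (m := Z.to_nat mz).
  assert (Hm : INR m = IZR mz) by (apply INR_Z2Nat; auto).
  assert (HK1 : (INR K0 + 1) / al <= INR N1).
  { apply Rle_trans with ((INR K0 + 1) * (/ al + / (1 - al))); [|lra].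
    unfold Rdiv. apply Rmult_le_compat_l. pose proof (pos_INR K0); lra.
    assert (0 < / (1 - al)) by (apply Rinv_0_lt_compat; lra). lra. }
  assert (HK2 : (INR K0 + 1) / (1 - al) <= INR N1).
  { apply Rle_trans with ((INR K0 + 1) * (/ al + / (1 - al))); [|lra].
    unfold Rdiv. apply Rmult_le_compat_l. pose proof (pos_INR K0); lra.
    assert (0 < / al) by (apply Rinv_0_lt_compat; lra). lra. }
  assert (HK1' : INR K0 + 1 <= INR n * al).
  { apply Rle_trans with (INR N1 * al); [|nra].
    apply Rmult_le_reg_r with (/ al). apply Rinv_0_lt_compat; lra.
    rewrite Rmult_assoc, Rinv_r, Rmult_1_r by lra. exact HK1. }
  assert (HK2' : INR K0 + 1 <= INR n * (1 - al)).
  { apply Rle_trans with (INR N1 * (1 - al)); [|nra].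
    apply Rmult_le_reg_r with (/ (1 - al)). apply Rinv_0_lt_compat; lra.
    rewrite Rmult_assoc, Rinv_r, Rmult_1_r by lra. exact HK2. }
  assert (Hmn : (m < n)%nat).
  { apply INR_lt. rewrite Hm. unfold t, u in Ht. nra. }
  exists n, m, t. split; [unfold n; lia|]. split; [unfold n; apply mod2; auto|]. split; [auto|].
  split.
  { apply Nat.lt_le_incl. apply INR_lt. rewrite Hm. unfold t, u in Ht. lra. }
  split.
  { apply INR_le. rewrite minus_INR by lia. rewrite S_INR, Hm. unfold t, u in Ht. lra. }
  split; [auto|].
  assert (Hmp : m = (2 * Z.to_nat P + p)%nat) by (unfold m, mz; lia).
  rewrite (Dn_decomp n m t x Hmn).
  - rewrite Hmp at 1. rewrite pow_add, pow_mult. replace ((-1)^2) with 1 by ring. rewrite pow1, Rmult_1_l. reflexivity.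
  - lra.
  - rewrite Hm. replace (IZR mz + t) with u by (unfold t; ring). unfold u, al. field. lra.
Qed.

Lemma term_der (s a t : R) : t + a <> 0 -> ex_derive (fun t => s / (t + a)) t.
Proof. intros H. auto_derive. exact H. Qed.

Lemma A_der K t : 0 < t -> ex_derive (A K) t.
Proof.
  intros Ht. induction K.
  - apply ex_derive_ext with (fun t => (-1)^0 / (t + INR 0)). { intros; reflexivity. }
    apply term_der. simpl. lra.
  - apply ex_derive_ext with (fun t => plus (A K t) ((-1)^(S K) / (t + INR (S K)))).
    { intros; reflexivity. }
    apply (@ex_derive_plus R_AbsRing R_NormedModule (A K) (fun t => (-1)^(S K) / (t + INR (S K)))); auto. apply term_der. pose proof (pos_INR (S K)). lra.
Qed.

Definition G K t := A K t + A K (1 - t).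

Lemma G_der K t : 0 < t < 1 -> ex_derive (G K) t.
Proof.
  intros Ht. apply ex_derive_ext with (fun t => plus (A K t) (A K (1 - t))). { intros; reflexivity. }
  apply (@ex_derive_plus R_AbsRing R_NormedModule (A K) (fun t => A K (1 - t))). apply A_der; lra.
  apply (ex_derive_comp (A K) (fun t => 1 - t)). apply A_der; lra.
  apply ex_derive_ext with (fun t => minus 1 t). { intros; reflexivity. }
  apply (@ex_derive_minus R_AbsRing R_NormedModule (fun _ => 1) (fun t => t)). apply ex_derive_const. apply ex_derive_id.
Qed.

Lemma der_cont f t : ex_derive f t -> continuity_pt f t.
Proof. intros H. apply continuity_pt_filterlim. apply (ex_derive_continuous f t H). Qed.

Lemma leibniz N : PI <= G (2 * N) (/ 2) <= PI + 4 / (4 * INR N + 3).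
Proof.
  assert (E : forall K, A K (/ 2) = 2 * sum_f_R0 (tg_alt PI_tg) K).
  { intros K. unfold A. rewrite scal_sum. apply sum_eq. intros i _. unfold tg_alt, PI_tg.
    rewrite plus_INR, mult_INR. simpl INR. pose proof (pos_INR i). field. lra. }
  unfold G. replace (1 - / 2) with (/ 2) by field. rewrite E.
  destruct (PI_ineq N) as [h1 h2].
  assert (E2 : sum_f_R0 (tg_alt PI_tg) (S (2 * N)) = sum_f_R0 (tg_alt PI_tg) (2 * N) - / (4 * INR N + 3)).
  { rewrite tech5. unfold tg_alt at 2, PI_tg. rewrite <- tech_pow_Rmult, pow_mult. replace ((-1)^2) with 1 by ring.
    rewrite pow1. replace (INR (2 * S (2 * N) + 1)) with (4 * INR N + 3).
    ring. rewrite plus_INR, !mult_INR, !S_INR, !mult_INR. simpl INR. ring. }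
  rewrite E2 in h1. pose proof (pos_INR N). split; [lra|].
  replace (4 / (4 * INR N + 3)) with (4 * / (4 * INR N + 3)) by (field; lra). lra.
Qed.

Lemma G_lower K t : 0 < t < 1 -> / t - 1 <= G K t.
Proof. intros. unfold G. pose proof (A_lower K t ltac:(lra)). pose proof (A_nonneg K (1 - t) ltac:(lra)). lra. Qed.

Lemma abs4 a b c d : Rabs (a+b+c+d) <= Rabs a + Rabs b + Rabs c + Rabs d.
Proof. pose proof (Rabs_triang (a+b+c) d); pose proof (Rabs_triang (a+b) c); pose proof (Rabs_triang a b). lra. Qed.

Lemma target_approx c eps : PI <= c -> 0 < eps ->
  exists t0 d K0, 0 < t0 /\ 0 < d /\ t0 + d < 1 /\
    forall t, t0 < t < t0 + d -> forall K1 K2, (K0 <= K1)%nat -> (K0 <= K2)%nat ->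
      Rabs (A K1 t + A K2 (1 - t) - c) < eps.
Proof.
  intros Hc Heps. pose proof PI_RGT_0 as Hpi.
  destruct (nat_big (8 / eps)) as [N HN].
  assert (HNp : 0 < INR N). { assert (0 < 8 / eps) by (apply Rdiv_lt_0_compat; lra). lra. }
  assert (HNe : / INR N < eps / 8).
  { apply Rmult_lt_reg_l with (INR N); auto. rewrite Rinv_r by lra.
    apply Rmult_lt_reg_l with (8 / eps). apply Rdiv_lt_0_compat; lra.
    replace (8 / eps * (INR N * (eps / 8))) with (INR N) by (field; lra). field_simplify; lra. }
  set (K := (2 * N)%nat).
  destruct (leibniz N) as [L1 L2]. fold K in L1, L2.
  assert (L3 : 4 / (4 * INR N + 3) <= / INR N).
  { unfold Rdiv. apply Rle_trans with (4 * / (4 * INR N)).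
    apply Rmult_le_compat_l. lra. apply Rinv_le_contravar; lra.
    right. field. lra. }
  set (c' := Rmax c (G K (/ 2))).
  assert (Hc1 : c <= c' /\ G K (/2) <= c') by (split; [apply Rmax_l | apply Rmax_r]).
  assert (Hc2 : c' - c <= / INR N).
  { unfold c'. destruct (Rle_dec c (G K (/2))). rewrite Rmax_right by lra. lra. rewrite Rmax_left by lra. lra. }
  set (tl := / (c' + 2)).
  assert (Htl : 0 < tl < / 2).
  { unfold tl. split. apply Rinv_0_lt_compat; lra. apply Rinv_lt_contravar; nra. }
  assert (HGtl : c' < G K tl).
  { pose proof (G_lower K tl ltac:(lra)). unfold tl in H at 1. rewrite Rinv_inv in H. lra. }
  assert (Hstar : exists ts, tl <= ts <= / 2 /\ G K ts = c').
  { destruct (Req_dec (G K (/2)) c') as [e|ne].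
    - exists (/2). split; [lra|auto].
    - destruct (IVT_interv (fun t => c' - G K t) tl (/ 2)) as [z [Hz1 Hz2]].
      + intros a Ha. apply der_cont.
        apply (ex_derive_ext (fun t => minus c' (G K t))). { intros; reflexivity. }
        apply (@ex_derive_minus R_AbsRing R_NormedModule (fun _ => c') (G K)).
        apply ex_derive_const. apply G_der. lra.
      + lra.
      + lra.
      + lra.
      + exists z. split; [auto|lra]. }
  destruct Hstar as [ts [Hts HGts]].
  assert (Hcont : continuity_pt (G K) ts) by (apply der_cont; apply G_der; lra).
  unfold continuity_pt, continue_in, limit1_in, limit_in in Hcont.
  destruct (Hcont (eps / 4) ltac:(lra)) as [alp [Halp Hc3]].
  simpl in Hc3. unfold R_dist in Hc3.
  set (dl := Rmin alp (Rmin (ts / 2) (/ 4)) / 2).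
  assert (Hdl : 0 < dl /\ dl < alp /\ dl <= ts / 4 /\ dl <= / 8).
  { unfold dl. pose proof (Rmin_l alp (Rmin (ts / 2) (/ 4))). pose proof (Rmin_r alp (Rmin (ts / 2) (/ 4))).
    pose proof (Rmin_l (ts / 2) (/ 4)). pose proof (Rmin_r (ts / 2) (/ 4)).
    assert (0 < Rmin alp (Rmin (ts / 2) (/ 4))).
    { apply Rmin_pos; auto. apply Rmin_pos; lra. }
    lra. }
  exists (ts - dl), (2 * dl), K. split; [lra|]. split; [lra|]. split; [lra|].
  intros t Ht K1 K2 HK1 HK2.
  assert (HGt : Rabs (G K t - c') < eps / 4).
  { destruct (Req_dec t ts) as [->|ne].
    - rewrite HGts, Rminus_diag, Rabs_R0. lra.
    - rewrite <- HGts. apply Hc3. split. split; [exact I|auto].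
      apply Rabs_def1; lra. }
  pose proof (A_tail t K K1 ltac:(lra) HK1) as T1.
  pose proof (A_tail (1 - t) K K2 ltac:(lra) HK2) as T2.
  assert (HK : / (INR K + 1) <= / INR N).
  { apply Rinv_le_contravar; auto. unfold K. rewrite mult_INR. simpl INR. lra. }
  unfold G in HGt.
  replace (A K1 t + A K2 (1 - t) - c) with ((A K1 t - A K t) + (A K2 (1 - t) - A K (1 - t)) + (A K t + A K (1 - t) - c') + (c' - c)) by ring.
  eapply Rle_lt_trans; [apply abs4|].
  rewrite (Rabs_pos_eq (c' - c)) by lra. lra.
Qed.

Definition Qlev (y : Rbar) (j : nat) (v : R) : Prop :=
  match y with
  | Finite yv => Rabs (v - yv) < / (INR j + 1)
  | p_infty => INR j < v
  | m_infty => v < - INR j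
  end.

Lemma key x r y (hx : -1 < x < 1) (hirr : irrational x) (hr : (r = 0 \/ r = 1)%nat) (hy : abs_ge_pi2 y) :
  forall j N, exists n, (N < n)%nat /\ Nat.modulo n 2 = r /\ Qlev y j (Dn n x / INR n).
Proof.
  intros j N. pose proof (pos_INR j) as Hj.
  destruct y as [yv| |]; simpl in hy.
  - set (c := 2 * Rabs yv).
    set (p := if Rle_dec 0 yv then 0%nat else 1%nat).
    assert (Hp : (p <= 1)%nat) by (unfold p; destruct (Rle_dec 0 yv); lia).
    assert (Hyv : yv = / 2 * ((-1) ^ p * c)).
    { unfold p, c. destruct (Rle_dec 0 yv).
      - rewrite Rabs_pos_eq by auto. simpl. field.
      - rewrite Rabs_left by lra. simpl. field. }
    destruct (target_approx c (2 / (INR j + 1))) as [t0 [d [K0 [Ht0 [Hd [Htd Happ]]]]]].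
    { unfold c. lra. } { apply Rdiv_lt_0_compat; lra. }
    destruct (window x r p t0 d K0 N hx hirr hr Hp Ht0 Hd Htd) as [n [m [t [Hn [Hmod [Hmn [HK1 [HK2 [Ht HD]]]]]]]]].
    exists n. split; [auto|]. split; [auto|]. simpl. rewrite HD, Hyv.
    replace (/ 2 * ((-1) ^ p * (A m t + A (n - S m) (1 - t))) - / 2 * ((-1) ^ p * c))
      with (/ 2 * (-1) ^ p * (A m t + A (n - S m) (1 - t) - c)) by ring.
    rewrite Rabs_mult, Rabs_mult, pow_1_abs, Rabs_pos_eq by lra.
    specialize (Happ t Ht m (n - S m)%nat HK1 HK2).
    replace (/ (INR j + 1)) with (/ 2 * 1 * (2 / (INR j + 1))) by (field; lra).
    apply Rmult_lt_compat_l; [lra|]. exact Happ.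
  - set (t0 := / (4 * (INR j + 2))).
    assert (Ht0 : 0 < t0) by (apply Rinv_0_lt_compat; lra).
    assert (Ht0' : t0 < / 4) by (apply Rinv_lt_contravar; lra).
    destruct (window x r 0 t0 t0 0 N hx hirr hr ltac:(lia) Ht0 Ht0 ltac:(lra)) as [n [m [t [Hn [Hmod [Hmn [HK1 [HK2 [Ht HD]]]]]]]]].
    exists n. split; [auto|]. split; [auto|]. simpl. rewrite HD. simpl pow.
    pose proof (G_lower m t ltac:(lra)). pose proof (A_nonneg (n - S m) (1 - t) ltac:(lra)).
    pose proof (A_lower m t ltac:(lra)).
    assert (2 * (INR j + 2) < / t).
    { replace (2 * (INR j + 2)) with (/ (t0 + t0)) by (unfold t0; field; lra).
      apply Rinv_lt_contravar; nra. }
    lra.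
  - set (t0 := / (4 * (INR j + 2))).
    assert (Ht0 : 0 < t0) by (apply Rinv_0_lt_compat; lra).
    assert (Ht0' : t0 < / 4) by (apply Rinv_lt_contravar; lra).
    destruct (window x r 1 t0 t0 0 N hx hirr hr ltac:(lia) Ht0 Ht0 ltac:(lra)) as [n [m [t [Hn [Hmod [Hmn [HK1 [HK2 [Ht HD]]]]]]]]].
    exists n. split; [auto|]. split; [auto|]. simpl. rewrite HD. simpl pow.
    pose proof (A_nonneg (n - S m) (1 - t) ltac:(lra)).
    pose proof (A_lower m t ltac:(lra)).
    assert (2 * (INR j + 2) < / t).
    { replace (2 * (INR j + 2)) with (/ (t0 + t0)) by (unfold t0; field; lra).
      apply Rinv_lt_contravar; nra. }
    lra.
Qed.

Theorem lemma7 (x : R) (hx : -1 < x < 1) (hirr : irrational x)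
  (r : nat) (hr : (r = 0 \/ r = 1)%nat) (y : Rbar) (hy : abs_ge_pi2 y) :
  exists nj : nat -> nat,
    (forall j, (nj j < nj (S j))%nat) /\
    (forall j, (Nat.modulo (nj j) 2 = r)%nat) /\
    is_lim_seq (fun j => Dn (nj j) x / INR (nj j)) y.
Proof.
  pose proof (key x r y hx hirr hr hy) as H.
  set (f := fun j N => proj1_sig (constructive_indefinite_description _ (H j N))).
  assert (Hf : forall j N, (N < f j N)%nat /\ Nat.modulo (f j N) 2 = r /\ Qlev y j (Dn (f j N) x / INR (f j N))).
  { intros j N. unfold f. destruct (constructive_indefinite_description _ (H j N)) as [n Hn]. exact Hn. }
  set (nj := fix g (j : nat) : nat := match j with 0%nat => f 0%nat 0%nat | S j' => f j (g j') end).
  assert (Hnj : forall j, Nat.modulo (nj j) 2 = r /\ Qlev y j (Dn (nj j) x / INR (nj j))).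
  { intros [|j]; simpl; apply Hf. }
  exists nj. split; [|split].
  - intros j. change (nj (S j)) with (f (S j) (nj j)). apply Hf.
  - intros j. apply Hnj.
  - apply is_lim_seq_spec. destruct y as [yv| |]; simpl.
    + intros eps. destruct (nat_big (/ eps)) as [J HJ]. exists J. intros j Hj.
      destruct (Hnj j) as [_ Hq]. simpl in Hq. eapply Rlt_le_trans; [exact Hq|].
      pose proof (cond_pos eps). apply le_INR in Hj.
      apply Rle_trans with (/ (INR J + 1)). apply Rinv_le_contravar. pose proof (pos_INR J); lra. lra.
      left. rewrite <- (Rinv_inv eps). apply Rinv_lt_contravar. apply Rmult_lt_0_compat.
      apply Rinv_0_lt_compat; lra. pose proof (pos_INR J); lra. lra.
    + intros M. destruct (nat_big M) as [J HJ]. exists J. intros j Hj.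
      destruct (Hnj j) as [_ Hq]. simpl in Hq. apply le_INR in Hj. lra.
    + intros M. destruct (nat_big (- M)) as [J HJ]. exists J. intros j Hj.
      destruct (Hnj j) as [_ Hq]. simpl in Hq. apply le_INR in Hj. lra.
Qed.
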